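(* For regular spaces $X$, the following properties are pairwise equivalent: DCCC; selectively $3$-star-ccc; selectively $\omega$-star-ccc; weakly star-Lindelöf; weakly $\omega$-star-Lindelöf; weakly strongly $2$-star-Lindelöf; weakly strongly $\omega$-star-Lindelöf; $2$-star-Lindelöf; $\omega$-star-Lindelöf; strongly $3$-star-Lindelöf; strongly $\omega$-star-Lindelöf (and hence so is every property that is implied by one of these and implies another of these).
   Context: For $B\subseteq X$ and a family $\mathcal{U}$ of subsets of $X$: $\operatorname{st}^1(B,\mathcal{U})=\bigcup\{U\in\mathcal{U}:U\cap B\neq\emptyset\}$, $\operatorname{st}^{n+1}(B,\mathcal{U})=\bigcup\{U\in\mathcal{U}:U\cap\operatorname{st}^n(B,\mathcal{U})\neq\emptyset\}$. DCCC: every discrete family of open sets is countable. For $k\in\mathbb{N}^+$: $X$ is $k$-star-Lindelöf (resp. strongly $k$-star-Lindelöf) if every open cover $\mathcal{U}$ admits a countable $\mathcal{V}\subseteq\mathcal{U}$ (resp. countable $B\subseteq X$) with $\operatorname{st}^k(\bigcup\mathcal{V},\mathcal{U})=X$ (resp. $\operatorname{st}^k(B,\mathcal{U})=X$); weakly $k$-star-Lindelöf (resp. weakly strongly $k$-star-Lindelöf) is the same with the conclusion replaced by density: $\overline{\operatorname{st}^k(\bigcup\mathcal{V},\mathcal{U})}=X$ (resp. $\overline{\operatorname{st}^k(B,\mathcal{U})}=X$). The $\omega$-versions ($\omega$-star-Lindelöf, strongly $\omega$-star-Lindelöf, weakly $\omega$-star-Lindelöf, weakly strongly $\omega$-star-Lindelöf)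 are defined the same way except that for each open cover one only requires some $k\in\mathbb{N}^+$ (depending on the cover) together with the countable $\mathcal{V}$ or $B$. ''Weakly star-Lindelöf'' means weakly $1$-star-Lindelöf. $X$ is selectively $k$-star-ccc if for every open cover $\mathcal{U}$ and every sequence $(\mathcal{A}_n:n\in\omega)$ of maximal pairwise disjoint families of open sets there is $(A_n\in\mathcal{A}_n:n\in\omega)$ with $\operatorname{st}^k(\bigcup_n A_n,\mathcal{U})=X$; selectively $\omega$-star-ccc is the same but with some $k\in\mathbb{N}^+$ (depending on $\mathcal{U}$ and the sequence) allowed. *)

(* Defs.v *)
From HB Require Import structures.
From mathcomp Require Import all_boot all_order.
From mathcomp Require Import all_classical all_reals topology.
Set Implicit Arguments. Unset Strict Implicit. Unset Printing Implicit Defensive.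
Local Open Scope classical_set_scope.

Section StarDefs.
Variable X : topologicalType.

Definition open_cover (U : set (set X)) :=
  (forall W, U W -> open W) /\ \bigcup_(W in U) W = setT.

Definition star1 (U : set (set X)) (B : set X) : set X :=
  \bigcup_(W in [set W | U W /\ W `&` B !=set0]) W.

Definition stk (k : nat) (B : set X) (U : set (set X)) : set X :=
  iter k (star1 U) B.

Definition discrete_family (F : set (set X)) :=
  forall x : X, exists N : set X, nbhs x N /\
    forall D1 D2, F D1 -> F D2 -> D1 `&` N !=set0 -> D2 `&` N !=set0 -> D1 = D2.

Definition DCCC :=
  forall F : set (set X), (forall D, F D -> open D) -> discrete_family F ->
    countable F.

Definition k_star_Lindelof (k : nat) :=
  forall U, open_cover U -> exists V, V `<=` U /\ countable V /\
    stk k (\bigcup_(W in V) W) U = setT.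

Definition strongly_k_star_Lindelof (k : nat) :=
  forall U, open_cover U -> exists B : set X, countable B /\ stk k B U = setT.

Definition weakly_k_star_Lindelof (k : nat) :=
  forall U, open_cover U -> exists V, V `<=` U /\ countable V /\
    closure (stk k (\bigcup_(W in V) W) U) = setT.

Definition weakly_strongly_k_star_Lindelof (k : nat) :=
  forall U, open_cover U -> exists B : set X, countable B /\
    closure (stk k B U) = setT.

Definition omega_star_Lindelof :=
  forall U, open_cover U -> exists k, (0 < k)%N /\ exists V, V `<=` U /\
    countable V /\ stk k (\bigcup_(W in V) W) U = setT.

Definition strongly_omega_star_Lindelof :=
  forall U, open_cover U -> exists k, (0 < k)%N /\
    exists B : set X, countable B /\ stk k B U = setT.

Definition weakly_omega_star_Lindelof :=
  forall U, open_cover U -> exists k, (0 < k)%N /\ exists V, V `<=` U /\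
    countable V /\ closure (stk k (\bigcup_(W in V) W) U) = setT.

Definition weakly_strongly_omega_star_Lindelof :=
  forall U, open_cover U -> exists k, (0 < k)%N /\
    exists B : set X, countable B /\ closure (stk k B U) = setT.

Definition disjoint_open_family (A : set (set X)) :=
  (forall W, A W -> open W) /\
  (forall W1 W2, A W1 -> A W2 -> W1 <> W2 -> W1 `&` W2 = set0).

Definition maximal_disjoint_open_family (A : set (set X)) :=
  disjoint_open_family A /\
  forall A', disjoint_open_family A' -> A `<=` A' -> A' = A.

Definition selectively_k_star_ccc (k : nat) :=
  forall U (A : nat -> set (set X)), open_cover U ->
    (forall n, maximal_disjoint_open_family (A n)) ->
    exists a : nat -> set X, (forall n, A n (a n)) /\
      stk k (\bigcup_n a n) U = setT.

Definition selectively_omega_star_ccc :=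
  forall U (A : nat -> set (set X)), open_cover U ->
    (forall n, maximal_disjoint_open_family (A n)) ->
    exists k, (0 < k)%N /\ exists a : nat -> set X, (forall n, A n (a n)) /\
      stk k (\bigcup_n a n) U = setT.

End StarDefs.

(* Main.v *)
Require Import Defs.
From HB Require Import structures.
From mathcomp Require Import all_boot all_order.
From mathcomp Require Import all_classical all_reals topology.
From mathcomp Require Import zify.
Set Implicit Arguments. Unset Strict Implicit. Unset Printing Implicit Defensive.
Local Open Scope classical_set_scope.

Lemma ex_choice X Y (P : X -> Y -> Prop) :
  (forall x, exists y, P x y) -> exists f, forall x, P x (f x).
Proof. by move=> /choice[f fP]; exists f. Qed.

Lemma star1_mono (X : topologicalType) (U : set (set X)) (A B : set X) :
  A `<=` B -> star1 U A `<=` star1 U B.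
Proof.
move=> AB x [W [UW [y [Wy Ay]]] Wx]; exists W => //; split => //.
by exists y; split => //; apply: AB.
Qed.

Lemma stk_mono (X : topologicalType) (U : set (set X)) k (A B : set X) :
  A `<=` B -> stk k A U `<=` stk k B U.
Proof.
rewrite /stk; elim: k => [//|k IH] AB /=; apply: star1_mono; exact: IH.
Qed.

Lemma star1_sub (X : topologicalType) (U : set (set X)) (A : set X) :
  open_cover U -> A `<=` star1 U A.
Proof.
move=> [_ cov] x Ax.
have : (\bigcup_(W in U) W) x by rewrite cov.
by move=> [W UW Wx]; exists W => //; split => //; exists x.
Qed.

Lemma stkSr (X : topologicalType) (U : set (set X)) k (A : set X) :
  stk k.+1 A U = stk k (star1 U A) U.
Proof. by rewrite /stk iterSr. Qed.

Lemma star1_open_mem (X : topologicalType) (U : set (set X)) (A : set X) W :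
  U W -> W `&` A !=set0 -> W `<=` star1 U A.
Proof. by move=> UW WA x Wx; exists W. Qed.

Lemma countableU2 T (A B : set T) : countable A -> countable B -> countable (A `|` B).
Proof.
move=> /countable_injP[f fi] /countable_injP[g gi]; apply/countable_injP.
exists (fun x => if `[< A x >] then (f x).*2 else (g x).*2.+1).
move=> x y; rewrite !inE => xAB yAB.
case: (asboolP (A x)) => Ax; case: (asboolP (A y)) => Ay.
- by move=> h; apply: fi; rewrite ?inE //; lia.
- by lia.
- by lia.
- move=> h; apply: gi; rewrite ?inE; [by case: xAB|by case: yAB|lia].
Qed.

Lemma countable_image T U (f : T -> U) (A : set T) : countable A -> countable (f @` A).
Proof. by move=> cA; apply: card_le_trans (card_image_le f A) cA. Qed.

Lemma V_to_B (X : topologicalType) (U V : set (set X)) :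
  V `<=` U -> countable V ->
  exists B : set X, countable B /\ \bigcup_(W in V) W `<=` star1 U B.
Proof.
move=> VU cV.
have [x0|X0] := pselect (exists x : X, True); last first.
  by exists set0; split => // x; exfalso; apply: X0; exists x.
case: x0 => x0 _.
have [p pP] : exists p : set X -> X, forall W, W !=set0 -> W (p W).
  apply: (@ex_choice _ _ (fun W x => W !=set0 -> W x)) => W.
  have [[x Wx]|W0] := pselect (W !=set0); first by exists x.
  by exists x0.
exists (p @` V); split; first exact: countable_image.
move=> x [W VW Wx]; apply: (star1_open_mem (W := W)); first exact: VU.
  exists (p W); split; first by apply: pP; exists x.
  by exists W.
done.
Qed.

Lemma B_to_V (X : topologicalType) (U : set (set X)) (B : set X) :
  open_cover U -> countable B ->
  exists V, V `<=` U /\ countable V /\ B `<=` \bigcup_(W in V) W.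
Proof.
move=> [oU cov] cB.
have [w wP] : exists w : X -> set X, forall x, U (w x) /\ w x x.
  apply: (@ex_choice _ _ (fun x W => U W /\ W x)) => x.
  have : (\bigcup_(W in U) W) x by rewrite cov.
  by move=> [W UW Wx]; exists W.
exists (w @` B); split; first by move=> _ [x _ <-]; exact: (wP x).1.
split; first exact: countable_image.
by move=> x Bx; exists (w x); [exists x|exact: (wP x).2].
Qed.

Lemma L_P9_P5 (X : topologicalType) : omega_star_Lindelof X -> weakly_omega_star_Lindelof X.
Proof.
move=> h U cU; have [k [k0 [V [VU [cV e]]]]] := h U cU.
by exists k; split => //; exists V; rewrite e closureT.
Qed.

Lemma L_P5_P7 (X : topologicalType) :
  weakly_omega_star_Lindelof X -> weakly_strongly_omega_star_Lindelof X.
Proof.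
move=> h U cU; have [k [k0 [V [VU [cV e]]]]] := h U cU.
have [B [cB VB]] := V_to_B VU cV.
exists k.+1; split => //; exists B; split => //.
apply/seteqP; split => //; rewrite -e.
apply: closureS; rewrite stkSr; exact: stk_mono.
Qed.

Lemma L_P4_P6 (X : topologicalType) :
  weakly_k_star_Lindelof X 1 -> weakly_strongly_k_star_Lindelof X 2.
Proof.
move=> h U cU; have [V [VU [cV e]]] := h U cU.
have [B [cB VB]] := V_to_B VU cV.
exists B; split => //.
apply/seteqP; split => //; rewrite -e.
apply: closureS; rewrite (stkSr U 1 B); exact: stk_mono.
Qed.

Lemma L_P8_P10 (X : topologicalType) :
  k_star_Lindelof X 2 -> strongly_k_star_Lindelof X 3.
Proof.
move=> h U cU; have [V [VU [cV e]]] := h U cU.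
have [B [cB VB]] := V_to_B VU cV.
exists B; split => //.
apply/seteqP; split => //; rewrite -e.
rewrite (stkSr U 2 B); exact: stk_mono.
Qed.

Lemma L_P11_P9 (X : topologicalType) :
  strongly_omega_star_Lindelof X -> omega_star_Lindelof X.
Proof.
move=> h U cU; have [k [k0 [B [cB e]]]] := h U cU.
have [V [VU [cV BV]]] := B_to_V cU cB.
exists k; split => //; exists V; split => //; split => //.
apply/seteqP; split => //; rewrite -e.
exact: stk_mono.
Qed.

Lemma chain2 T (F : set (set T)) a b :
  total_on F subset -> (\bigcup_(A in F) A) a -> (\bigcup_(A in F) A) b ->
  exists2 A, F A & A a /\ A b.
Proof.
move=> tot [A FA Aa] [B FB Bb].
have [AB|BA] := tot A B FA FB.
- by exists B => //; split => //; exact: AB.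
- by exists A => //; split => //; exact: BA.
Qed.

Definition farP (X : topologicalType) (U : set (set X)) (O : set (set X)) :=
  (forall D, O D -> open D /\ D !=set0 /\ exists W, U W /\ D `<=` W) /\
  (forall W D1 D2, U W -> O D1 -> O D2 -> W `&` D1 !=set0 -> W `&` D2 !=set0 -> D1 = D2).

Lemma far_max (X : topologicalType) (U : set (set X)) :
  exists O, farP U O /\ forall B, O `<` B -> ~ farP U B.
Proof.
apply: Zorn_bigcup => F FP tot; split.
- by move=> D [A FA AD]; exact: (FP A FA).1 _ AD.
- move=> W D1 D2 UW h1 h2 m1 m2.
  have [A FA [AD1 AD2]] := chain2 tot h1 h2.
  exact: (FP A FA).2 W D1 D2 UW AD1 AD2 m1 m2.
Qed.

Lemma DCCC_main (X : topologicalType) (U : set (set X)) :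
  DCCC X -> open_cover U -> exists V, V `<=` U /\ countable V /\
    stk 2 (\bigcup_(W in V) W) U = setT /\
    closure (stk 1 (\bigcup_(W in V) W) U) = setT.
Proof.
move=> dccc cU; have [oU cov] := cU.
have [w wP] : exists w : X -> set X, forall x, U (w x) /\ w x x.
  apply: (@ex_choice _ _ (fun x W => U W /\ W x)) => x.
  have : (\bigcup_(W in U) W) x by rewrite cov.
  by move=> [W UW Wx]; exists W.
have [O [[O1 O2] Omax]] := far_max U.
have cO : countable O.
  apply: dccc; first by move=> D /O1 [].
  move=> x; exists (w x); split.
    by apply: open_nbhs_nbhs; split; [exact: oU (wP x).1|exact: (wP x).2].
  move=> D1 D2 h1 h2 m1 m2; apply: (O2 (w x)) => //; first exact: (wP x).1.
  - by case: m1 => y [? ?]; exists y.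
  - by case: m2 => y [? ?]; exists y.
have [u uP] : exists u : set X -> set X, forall D, O D -> U (u D) /\ D `<=` u D.
  apply: (@ex_choice _ _ (fun D W => O D -> U W /\ D `<=` W)) => D.
  have [OD|nOD] := pselect (O D); last by exists set0.
  by have [_ [_ [W [UW DW]]]] := O1 D OD; exists W.
set V := u @` O.
have VU : V `<=` U by move=> _ [D OD <-]; exact: (uP D OD).1.
have OV : forall D, O D -> D `<=` \bigcup_(W in V) W.
  by move=> D OD x Dx; exists (u D); [exists D|exact: (uP D OD).2].
exists V; split => //; split; first exact: countable_image.
split.
- apply/seteqP; split => // x _; apply: contrapT => nx.
  have nO : ~ O (w x).
    move=> Ow; apply: nx; rewrite /stk /=.
    apply: star1_sub => //; apply: star1_sub => //; exact: OV Ow _ (wP x).2.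
  apply: (Omax (O `|` [set w x])).
    split; first exact: subsetUl.
    by move=> /(_ (w x) (or_intror erefl)).
  split.
  + move=> D [/O1 //|->]; split; first exact: oU (wP x).1.
    split; first by exists x; exact: (wP x).2.
    by exists (w x); split => //; exact: (wP x).1.
  + have key : forall W D, U W -> O D -> W `&` D !=set0 -> W `&` w x !=set0 -> False.
      move=> W D UW OD [y [Wy Dy]] [z [Wz wz]]; apply: nx.
      rewrite /stk /=; exists (w x); last exact: (wP x).2.
      split; first exact: (wP x).1.
      exists z; split => //; exists W => //; split => //.
      by exists y; split => //; exact: OV OD _ Dy.
    move=> W D1 D2 UW [h1|->] [h2|->] m1 m2.
    * exact: O2 W D1 D2 UW h1 h2 m1 m2.
    * by exfalso; exact: key W D1 UW h1 m1 m2.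
    * by exfalso; exact: key W D2 UW h2 m2 m1.
    * by [].
- apply/seteqP; split => // x _; apply: contrapT => nx.
  set S1 := stk 1 _ U in nx.
  have [B [nB SB]] : exists B, nbhs x B /\ ~ (S1 `&` B !=set0).
    apply: contrapT => h; apply: nx => B nB; apply: contrapT => m.
    by apply: h; exists B.
  set G := B°.
  have oG : open G := @open_interior _ B.
  have Gx : G x by exact: nbhs_singleton (nbhs_interior nB).
  have GB : G `<=` B := @interior_subset _ B.
  have key : forall W, U W -> W `&` \bigcup_(W in V) W !=set0 -> W `&` G !=set0 -> False.
    move=> W UW m [z [Wz Gz]]; apply: SB; exists z; split; last exact: GB.
    by exists W.
  have nO : ~ O (G `&` w x).
    move=> OG; apply: (key (w x) (wP x).1).
    - exists x; split; first exact: (wP x).2.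
      by apply: (OV _ OG); split => //; exact: (wP x).2.
    - by exists x; split => //; exact: (wP x).2.
  apply: (Omax (O `|` [set G `&` w x])).
    split; first exact: subsetUl.
    by move=> /(_ (G `&` w x) (or_intror erefl)).
  split.
  + move=> D [/O1 //|->]; split; first exact: openI oG (oU _ (wP x).1).
    split; first by exists x; split => //; exact: (wP x).2.
    by exists (w x); split; [exact: (wP x).1|move=> y []].
  + have key2 : forall W D, U W -> O D -> W `&` D !=set0 -> W `&` (G `&` w x) !=set0 -> False.
      move=> W D UW OD [y [Wy Dy]] [z [Wz [Gz _]]]; apply: (key W UW).
      - by exists y; split => //; exact: OV OD _ Dy.
      - by exists z.
    move=> W D1 D2 UW [h1|->] [h2|->] m1 m2.
    * exact: O2 W D1 D2 UW h1 h2 m1 m2.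
    * by exfalso; exact: key2 W D1 UW h1 m1 m2.
    * by exfalso; exact: key2 W D2 UW h2 m2 m1.
    * by [].
Qed.

Lemma maxdisj_set0 (X : topologicalType) (A : set (set X)) :
  maximal_disjoint_open_family A -> A set0.
Proof.
move=> [[oA dA] mA].
have -> : A = A `|` [set set0].
  apply/esym/mA; last exact: subsetUl.
  split; first by move=> W [/oA //|->]; exact: open0.
  move=> W1 W2 [h1|->] [h2|->] ne.
  - exact: dA.
  - exact: setI0.
  - exact: set0I.
  - by [].
by right.
Qed.

Lemma maxdisj_meet (X : topologicalType) (A : set (set X)) (W : set X) :
  maximal_disjoint_open_family A -> open W -> W !=set0 ->
  exists a, A a /\ a `&` W !=set0.
Proof.
move=> [[oA dA] mA] oW W0; apply: contrapT => nh.
have hd : forall a, A a -> a `&` W = set0.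
  move=> a Aa; apply/seteqP; split => // y [ay Wy]; apply: nh.
  by exists a; split => //; exists y.
have e : A `|` [set W] = A.
  apply: mA; last exact: subsetUl.
  split; first by move=> V [/oA //|->].
  move=> W1 W2 [h1|->] [h2|->] ne.
  - exact: dA.
  - exact: hd.
  - by rewrite setIC; exact: hd.
  - by [].
have AW : A W by rewrite -e; right.
have := hd W AW; rewrite setIid => W00.
by case: W0 => y; rewrite W00.
Qed.

Lemma L_P8_P2 (X : topologicalType) :
  k_star_Lindelof X 2 -> selectively_k_star_ccc X 3.
Proof.
move=> h U A cU mA; have [oU _] := cU.
have [V [VU [cV e]]] := h U cU.
have [f fi] := countable_injP _ cV.
have [a aP] : exists a : nat -> set X, forall n, A n (a n) /\
    forall W, V W -> f W = n -> W !=set0 -> (a n) `&` W !=set0.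
  apply: (@ex_choice _ _ (fun n a => A n a /\
    forall W, V W -> f W = n -> W !=set0 -> a `&` W !=set0)) => n.
  have [[W0 [VW0 [fW0 W00]]]|nW] :=
    pselect (exists W0, V W0 /\ f W0 = n /\ W0 !=set0).
    have [a [Aa aW]] := maxdisj_meet (mA n) (oU _ (VU _ VW0)) W00.
    exists a; split => // W VW fW _.
    have -> : W = W0 by apply: fi; rewrite ?inE // fW fW0.
    done.
  exists set0; split; first exact: maxdisj_set0.
  by move=> W VW fW W0; exfalso; apply: nW; exists W.
exists a; split; first by move=> n; exact: (aP n).1.
apply/seteqP; split => //; rewrite -e.
have s1 : \bigcup_(W in V) W `<=` star1 U (\bigcup_n a n).
  move=> x [W VW Wx]; apply: (star1_open_mem (W := W)) => //; first exact: VU.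
  have [y [ay Wy]] := (aP (f W)).2 W VW erefl (ex_intro _ x Wx).
  by exists y; split => //; exists (f W).
rewrite /stk /=; apply: star1_mono; apply: star1_mono; exact: s1.
Qed.

Definition refP (X : topologicalType) (U : set (set X)) (A : set (set X)) :=
  disjoint_open_family A /\ forall D, A D -> D !=set0 -> exists W, U W /\ D `<=` W.

Lemma L_P3_P9 (X : topologicalType) :
  selectively_omega_star_ccc X -> omega_star_Lindelof X.
Proof.
move=> h U cU; have [oU cov] := cU.
have [w wP] : exists w : X -> set X, forall x, U (w x) /\ w x x.
  apply: (@ex_choice _ _ (fun x W => U W /\ W x)) => x.
  have : (\bigcup_(W in U) W) x by rewrite cov.
  by move=> [W UW Wx]; exists W.
have [A0 [[[oA dA] rA] Amax]] : exists A, refP U A /\ forall B, A `<` B -> ~ refP U B.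
  apply: Zorn_bigcup => F FP tot; split; first split.
  - by move=> D [B FB BD]; exact: (FP B FB).1.1 _ BD.
  - move=> W1 W2 h1 h2 ne.
    have [B FB [B1 B2]] := chain2 tot h1 h2.
    exact: (FP B FB).1.2 W1 W2 B1 B2 ne.
  - by move=> D [B FB BD]; exact: (FP B FB).2 _ BD.
have mA : maximal_disjoint_open_family A0.
  split; first by split.
  move=> A' [oA' dA'] AA'; apply/seteqP; split => // O' A'O'.
  apply: contrapT => nO'.
  have [[x O'x]|O'0] := pselect (O' !=set0); last first.
    have O'e : O' = set0.
      by apply/seteqP; split => // y O'y; apply: O'0; exists y.
    apply: (Amax (A0 `|` [set set0])).
      split; first exact: subsetUl.
      by move=> /(_ set0 (or_intror erefl)); rewrite -O'e.
    split; first split.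
    - by move=> D [/oA //|->]; exact: open0.
    - move=> W1 W2 [h1|->] [h2|->] ne.
      + exact: dA.
      + exact: setI0.
      + exact: set0I.
      + by [].
    - by move=> D [/rA //|-> [y []]].
  set O'' := O' `&` w x.
  have dO : forall D, A0 D -> D `&` O' = set0.
    move=> D AD; apply: dA' => //; first exact: AA'.
    by move=> DO; apply: nO'; rewrite -DO.
  have nO'' : ~ A0 O''.
    move=> AO; have := dO _ AO => /seteqP[/(_ x) h0 _].
    by apply: h0; split => //; split => //; exact: (wP x).2.
  apply: (Amax (A0 `|` [set O''])).
    split; first exact: subsetUl.
    by move=> /(_ O'' (or_intror erefl)).
  have dO2 : forall D, A0 D -> D `&` O'' = set0.
    move=> D AD; apply/seteqP; split => // y [Dy [O'y _]].
    by have := dO D AD => /seteqP[/(_ y) h0 _]; apply: h0.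
  split; first split.
  - by move=> D [/oA //|->]; apply: openI; [exact: oA' | exact: oU (wP x).1].
  - move=> W1 W2 [h1|->] [h2|->] ne.
    + exact: dA.
    + exact: dO2.
    + by rewrite setIC; exact: dO2.
    + by [].
  - move=> D [/rA //|-> _]; exists (w x); split; first exact: (wP x).1.
    by move=> y [].
have [k [k0 [a [aA e]]]] := h U (fun _ => A0) cU (fun _ => mA).
have [r rP] : exists r : set X -> set X, forall D, A0 D -> D !=set0 -> U (r D) /\ D `<=` r D.
  apply: (@ex_choice _ _ (fun D W => A0 D -> D !=set0 -> U W /\ D `<=` W)) => D.
  have [AD|nAD] := pselect (A0 D); last by exists set0.
  have [D0|nD0] := pselect (D !=set0); last by exists set0.
  by have [W [UW DW]] := rA D AD D0; exists W.
exists k; split => //.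
exists [set r (a n) | n in [set n | a n !=set0]]; split.
  by move=> _ [n n0 <-]; exact: (rP _ (aA n) n0).1.
split; first exact: countable_image.
apply/seteqP; split => //; rewrite -e; apply: stk_mono.
move=> x [n _ anx]; have n0 : a n !=set0 by exists x.
exists (r (a n)); first by exists n.
exact: (rP _ (aA n) n0).2.
Qed.

Lemma split_uncountable (T : pointedType) (S : set T) : ~ countable S ->
  exists d : T -> nat, forall k, ~ countable [set x | S x /\ (k <= d x)%N].
Proof.
move=> nS.
pose Q (A : set (set T)) :=
  (forall C, A C -> C `<=` S /\ exists f : nat -> T, injective f /\ C = range f) /\
  (forall C1 C2, A C1 -> A C2 -> C1 `&` C2 !=set0 -> C1 = C2).
have [A [[A1 A2] Amax]] : exists A, Q A /\ forall B, A `<` B -> ~ Q B.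
  apply: Zorn_bigcup => F FP tot; split.
  - by move=> C [B FB BC]; exact: (FP B FB).1 _ BC.
  - move=> C1 C2 h1 h2 m; have [B FB [B1 B2]] := chain2 tot h1 h2.
    exact: (FP B FB).2 _ _ B1 B2 m.
have nA : ~ countable A.
  move=> cA.
  have cU : countable (\bigcup_(C in A) C).
    apply: bigcup_countable => // C AC.
    by have [_ [f [_ ->]]] := A1 C AC; exact: countable_image.
  set R := S `\` \bigcup_(C in A) C.
  have nR : ~ countable R.
    move=> cR; apply: nS; apply: sub_countable (countableU2 cU cR).
    apply: subset_card_le => x Sx.
    have [h|h] := pselect ((\bigcup_(C in A) C) x); [by left|by right].
  have : infinite_set R by move=> fR; apply: nR; exact: finite_set_countable.
  move=> /infiniteP /pcard_leP[f].
  have fi : injective f by move=> a b; apply: (@inj _ _ _ f); rewrite inE.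
  have fR : forall n, R (f n) by move=> n; apply: funS.
  apply: (Amax (A `|` [set range f])).
    split; first exact: subsetUl.
    move=> /(_ (range f) (or_intror erefl)) AC.
    by have [_] := fR 0%N; apply; exists (range f) => //; exists 0%N.
  have key : forall C, A C -> C `&` range f !=set0 -> False.
    move=> C AC [y [Cy [n _ fny]]].
    by have [_] := fR n; apply; exists C => //; rewrite fny.
  split.
  - move=> D [/A1 //|->]; split; first by move=> _ [n _ <-]; exact: (fR n).1.
    by exists f.
  - move=> C1 C2 [h1|->] [h2|->] m.
    + exact: A2.
    + by exfalso; exact: key h1 m.
    + by exfalso; apply: (key C2 h2); rewrite setIC.
    + by [].
have [F FP] : exists F : set T -> nat -> T,
    forall C, A C -> injective (F C) /\ C = range (F C).
  apply: (@ex_choice _ _ (fun C f => A C -> injective f /\ C = range f)) => C.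
  have [AC|nAC] := pselect (A C); last by exists (fun _ => point).
  by have [_ [f [fi ->]]] := A1 C AC; exists f.
have [d dP] : exists d : T -> nat,
    forall x C n, A C -> x = F C n -> d x = n.
  apply: (@ex_choice _ _ (fun x m => forall C n, A C -> x = F C n -> m = n)) => x.
  have [[C [n [AC xe]]]|nx] := pselect (exists C n, A C /\ x = F C n); last first.
    by exists 0%N => C n AC xe; exfalso; apply: nx; exists C, n.
  exists n => C' n' AC' xe'.
  have CC : C = C'.
    apply: A2 => //; exists x; split.
    - by rewrite (FP C AC).2 xe; exists n.
    - by rewrite (FP C' AC').2 xe'; exists n'.
  by subst C'; apply: (FP C AC).1; rewrite -xe -xe'.
exists d => k ck; apply: nA.
have [g gi] := countable_injP _ ck.
apply/countable_injP; exists (fun C => g (F C k)).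
move=> C1 C2; rewrite !inE => AC1 AC2 e.
have inT : forall C, A C -> [set x | S x /\ (k <= d x)%N] (F C k).
  move=> C AC; split.
  - by apply: (A1 C AC).1; rewrite {1}(FP C AC).2; exists k.
  - by rewrite (dP _ C k AC erefl).
have e2 : F C1 k = F C2 k by apply: gi; rewrite ?inE //; apply: inT.
apply: A2 => //; exists (F C1 k); split.
- by rewrite {1}(FP C1 AC1).2; exists k.
- by rewrite e2 {1}(FP C2 AC2).2; exists k.
Qed.

Lemma reg_shrink (X : topologicalType) : regular_space X ->
  exists sh : X -> set X -> set X, forall y W, open W -> W y ->
    open (sh y W) /\ sh y W y /\ closure (sh y W) `<=` W.
Proof.
move=> hreg.
have : forall (y : X) (W : set X), exists G : set X, open W -> W y -> open G /\ G y /\ closure G `<=` W.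
  move=> y W; have [oWy|n] := pselect (open W /\ W y); last first.
    by exists set0 => oW Wy; exfalso; apply: n.
  have nW : nbhs y W by apply: open_nbhs_nbhs.
  have [V nV cVW] := hreg y W nW.
  exists V° => _ _; split; first exact: open_interior.
  split; first exact: nbhs_singleton (nbhs_interior nV).
  apply: subset_trans cVW; apply: closureS; exact: interior_subset.
move=> h.
have [sh shP] := @ex_choice (X * set X) (set X)
  (fun p G => open p.2 -> p.2 p.1 -> open G /\ G p.1 /\ closure G `<=` p.2)
  (fun p => h p.1 p.2).
by exists (fun y W => sh (y, W)) => y W; exact: (shP (y, W)).
Qed.

Lemma disc_disj (X : topologicalType) (F : set (set X)) :
  discrete_family F -> forall D1 D2 z, F D1 -> F D2 -> D1 z -> D2 z -> D1 = D2.
Proof.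
move=> dF D1 D2 z F1 F2 z1 z2; have [N [nN NP]] := dF z.
by apply: NP => //; exists z; split => //; exact: nbhs_singleton.
Qed.

Lemma L_P7_DCCC (X : topologicalType) : regular_space X ->
  weakly_strongly_omega_star_Lindelof X -> DCCC X.
Proof.
move=> hreg h F oF dF; apply: contrapT => nF.
set F' := [set D | F D /\ D !=set0].
have nF' : ~ countable F'.
  move=> cF'; apply: nF; apply: sub_countable (countableU2 cF' (countable1 set0)).
  apply: subset_card_le => D FD.
  have [[x Dx]|n0] := pselect (D !=set0); first by left; split => //; exists x.
  right; apply/seteqP; split => // y Dy; apply: n0; by exists y.
have [d dP] := split_uncountable nF'.
have [x0 _] : exists x0 : X, True.
  apply: contrapT => nx; apply: nF'.
  have -> : F' = set0.
    by apply/seteqP; split => // D [_ [y _]]; apply: nx; exists y.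
  exact: countable0.
have [xD xDP] : exists xD : set X -> X, forall D, F' D -> D (xD D).
  apply: (@ex_choice _ _ (fun D x => F' D -> D x)) => D.
  have [[_ [y Dy]]|nD] := pselect (F' D); last by exists x0.
  by exists y.
have [sh shP] := reg_shrink hreg.
pose G D j := iter j (sh (xD D)) D.
have G0 : forall D, G D 0%N = D by [].
have GS : forall D j, G D j.+1 = sh (xD D) (G D j) by [].
have Gp : forall D j, F' D -> open (G D j) /\ G D j (xD D).
  move=> D j FD; elim: j => [|j [oj xj]]; first by split; [exact: oF FD.1|exact: xDP].
  by rewrite GS; have [o [x _]] := shP _ _ oj xj.
have Gcl : forall D j, F' D -> closure (G D j.+1) `<=` G D j.
  by move=> D j FD; have [oj xj] := Gp D j FD; rewrite GS; have [_ [_ c]] := shP _ _ oj xj.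
have GSsub : forall D j, F' D -> G D j.+1 `<=` G D j.
  by move=> D j FD; apply: subset_trans (Gcl D j FD); exact: subset_closure.
have Gmono : forall D n m, F' D -> (n <= m)%N -> G D m `<=` G D n.
  move=> D n m FD /subnKC <-; elim: (m - n)%N => [|k IH]; first by rewrite addn0.
  by rewrite addnS; apply: subset_trans IH; exact: GSsub.
have GD : forall D j, F' D -> G D j `<=` D by move=> D j FD; exact: (Gmono D 0%N j FD).
have disj := disc_disj dF.
set O := ~` closure (\bigcup_(D in F') G D 1%N).
pose R D i := G D i `&` ~` closure (G D i.+2).
set U := [set O] `|` [set W | exists D i, F' D /\ (i < d D)%N /\ W = R D i]
  `|` [set W | exists D, F' D /\ W = G D (d D)].
have oU : forall W, U W -> open W.
  move=> W [[->|[D [i [FD [_ ->]]]]]|[D [FD ->]]].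
  - by rewrite /O openC; exact: closed_closure.
  - apply: openI; first exact: (Gp D i FD).1.
    by rewrite openC; exact: closed_closure.
  - exact: (Gp _ _ FD).1.
have inD : forall y, closure (\bigcup_(D in F') G D 1%N) y -> exists2 D, F' D & D y.
  move=> y cy; have [N [nN NP]] := dF y.
  have [z [[D0 FD0 Gz] Nz]] := cy N nN.
  exists D0 => //; apply: (Gcl D0 0%N FD0) => B nB.
  have [z' [[D FD Gz'] [Nz' Bz']]] := cy _ (filterI nN nB).
  have DD0 : D = D0.
    apply: NP; [exact: FD.1|exact: FD0.1| |].
    - by exists z'; split => //; exact: GD Gz'.
    - by exists z; split => //; exact: GD Gz.
  by subst D; exists z'.
have cU : open_cover U.
  split => //; apply/seteqP; split => // y _.
  have [cy|ncy] := pselect (closure (\bigcup_(D in F') G D 1%N) y); last first.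
    by exists O => //; left; left.
  have [D FD Dy] := inD y cy.
  suff : forall m i, (i + m)%N = d D -> G D i y -> (\bigcup_(W in U) W) y.
    by move=> /(_ (d D) 0%N (add0n _)); apply.
  elim => [|m IH] i e Gy.
    by exists (G D (d D)); [right; exists D|rewrite -e addn0].
  have [Gy1|nGy1] := pselect (G D i.+1 y); first by apply: (IH i.+1) => //; rewrite addSnnS.
  exists (R D i); first by left; right; exists D, i; split => //; split => //; lia.
  split => // cl; apply: nGy1; exact: (Gcl D i.+1 FD).
have [k [k0 [B [cB e]]]] := h U cU.
have [tD tDP] : exists tD : X -> set X, forall b D, F' D -> D b -> tD b = D.
  apply: (@ex_choice _ _ (fun b E => forall D, F' D -> D b -> E = D)) => b.
  have [[D [FD Db]]|nb] := pselect (exists D, F' D /\ D b); last first.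
    by exists set0 => D FD Db; exfalso; apply: nb; exists D.
  by exists D => D' FD' D'b; apply: (disj D D' b FD.1 FD'.1).
have [D [[FD kD] nT]] : exists D, (F' D /\ (k <= d D)%N) /\ ~ (D `&` B !=set0).
  apply: contrapT => nx; apply: (dP k).
  apply: sub_countable (countable_image tD cB); apply: subset_card_le.
  move=> D [FD kD]; have [b [Db Bb]] : D `&` B !=set0.
    by apply: contrapT => nDB; apply: nx; exists D.
  by exists b => //; exact: tDP.
have claim : forall j, (j <= d D)%N -> forall z, stk j B U z -> G D j z -> False.
  elim => [|j IH] jd z.
    by move=> Bz Dz; apply: nT; exists z.
  move=> [W [UW [w [Ww sw]]] Wz] Gz.
  suff WG : W `<=` G D j by apply: (IH (ltnW jd) w sw); exact: WG.
  move: UW => [[WO|[D' [i [FD' [id' We]]]]]|[D' [FD' We]]].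
  - exfalso; rewrite WO in Wz; apply: Wz; apply: subset_closure.
    by exists D => //; exact: (Gmono D 1%N j.+1 FD erefl).
  - have DD' : D' = D.
      apply: (disj D' D z FD'.1 FD.1); last exact: GD Gz.
      by rewrite We in Wz; exact: (GD D' i FD') Wz.1.
    subst D'; rewrite We => y [Gy _]; apply: (Gmono D j i FD _ y Gy).
    rewrite -ltnS ltnNge; apply/negP => ij; rewrite We in Wz; apply: Wz.2.
    apply: subset_closure; exact: (Gmono D i.+2 j.+1 FD ij z Gz).
  - have DD' : D' = D.
      apply: (disj D' D z FD'.1 FD.1); last exact: GD Gz.
      by rewrite We in Wz; exact: (GD D' _ FD') Wz.
    subst D'; rewrite We; exact: (Gmono D j (d D) FD (ltnW jd)).
have [oG xG] := Gp D k FD.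
have : closure (stk k B U) (xD D) by rewrite e.
move=> /(_ (G D k) (open_nbhs_nbhs (conj oG xG))) [z [sz Gz]].
exact: claim kD z sz Gz.
Qed.

Lemma d_P8 (X : topologicalType) : DCCC X -> k_star_Lindelof X 2.
Proof.
move=> h U cU; have [V [VU [cV [e _]]]] := DCCC_main h cU.
by exists V.
Qed.

Lemma d_P4 (X : topologicalType) : DCCC X -> weakly_k_star_Lindelof X 1.
Proof.
move=> h U cU; have [V [VU [cV [_ e]]]] := DCCC_main h cU.
by exists V.
Qed.

Theorem corollary7 (X : topologicalType) (hreg : @regular_space X) :
  [<-> DCCC X;
       selectively_k_star_ccc X 3;
       selectively_omega_star_ccc X;
       weakly_k_star_Lindelof X 1;
       weakly_omega_star_Lindelof X;
       weakly_strongly_k_star_Lindelof X 2;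
       weakly_strongly_omega_star_Lindelof X;
       k_star_Lindelof X 2;
       omega_star_Lindelof X;
       strongly_k_star_Lindelof X 3;
       strongly_omega_star_Lindelof X].
Proof.
have P7_P1 := L_P7_DCCC hreg.
tfae.
- by move=> h; apply: L_P8_P2; exact: d_P8.
- move=> h U A cU mA; have [a [aA e]] := h U A cU mA.
  by exists 3%N; split => //; exists a.
- move=> h; apply: d_P4; apply: P7_P1; apply: L_P5_P7; apply: L_P9_P5.
  exact: L_P3_P9.
- move=> h U cU; have [V [VU [cV e]]] := h U cU.
  by exists 1%N; split => //; exists V.
- move=> h; apply: L_P4_P6; apply: d_P4; apply: P7_P1; exact: L_P5_P7.
- move=> h U cU; have [B [cB e]] := h U cU.
  by exists 2%N; split => //; exists B.
- by move=> h; apply: d_P8; exact: P7_P1.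
- move=> h U cU; have [V [VU [cV e]]] := h U cU.
  by exists 2%N; split => //; exists V.
- move=> h; apply: L_P8_P10; apply: d_P8; apply: P7_P1; apply: L_P5_P7.
  exact: L_P9_P5.
- move=> h U cU; have [B [cB e]] := h U cU.
  by exists 3%N; split => //; exists B.
- move=> h; apply: P7_P1; apply: L_P5_P7; apply: L_P9_P5; exact: L_P11_P9.
Qed.
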